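(* Let $E$ be an ordered Banach space, $I$ an interval, and $f:I\rightarrow E$ a continuous function which is three times differentiable on the interior of $I$. Then $f$ is $3$-convex if and only if $f'''(t)\geq0$ (i.e. $f'''(t)\in E_+$) for all $t$ in the interior of $I$.
   Context: An ordered Banach space is a Banach space $E$ with a closed convex cone $E_+$ such that $E=E_+-E_+$, $(-E_+)\cap E_+=\{0\}$, ordered by $x\leq y$ iff $y-x\in E_+$, and such that $0\leq x\leq y$ implies $\|x\|\leq\|y\|$. A function $f:I\rightarrow E$ is $3$-convex if for all $x_0<x_1<x_2<x_3$ in $I$ the divided difference $[x_0,x_1,x_2,x_3;f]=\sum_{j=0}^{3}\frac{f(x_j)}{\prod_{k\neq j}(x_j-x_k)}$ belongs to $E_+$. Derivatives are taken in the norm of $E$. *)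

(* Defs.v *)
From HB Require Import structures.
From mathcomp Require Import all_boot all_order all_algebra.
From mathcomp Require Import all_classical all_reals all_analysis.
Set Implicit Arguments. Unset Strict Implicit. Unset Printing Implicit Defensive.
Import Order.TTheory GRing.Theory Num.Theory.
Import numFieldNormedType.Exports.
Local Open Scope classical_set_scope.
Local Open Scope ring_scope.

(* [P] is the positive cone E_+ of an ordered Banach space structure on the
   Banach space E: a closed convex cone, generating (E = E_+ - E_+), proper
   (E_+ ∩ -E_+ = {0}), with monotone norm (0 <= x <= y -> |x| <= |y|),
   where x <= y means y - x \in E_+. *)
Definition ordered_banach_cone (R : realType) (E : completeNormedModType R)
  (P : set E) : Prop :=
  [/\ closed P,
      (forall (a b : R) (x y : E), 0 <= a -> 0 <= b -> P x -> P y ->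
         P (a *: x + b *: y)),
      (forall z : E, exists x y, [/\ P x, P y & z = x - y]),
      (forall x : E, P x -> P (- x) -> x = 0)
    & (forall x y : E, P x -> P (y - x) -> `|x| <= `|y|)].

Definition divdiff3 (R : realType) (E : normedModType R) (f : R -> E)
  (x0 x1 x2 x3 : R) : E :=
  let s := [:: x0; x1; x2; x3] in
  \sum_(j < 4) (\prod_(k < 4 | k != j) (s`_j - s`_k))^-1 *: f s`_j.

Definition three_convex (R : realType) (E : normedModType R) (P : set E)
  (I : set R) (f : R -> E) : Prop :=
  forall x0 x1 x2 x3, I x0 -> I x1 -> I x2 -> I x3 ->
    x0 < x1 -> x1 < x2 -> x2 < x3 -> P (divdiff3 f x0 x1 x2 x3).

(* Main.v *)
Require Import Defs.
From HB Require Import structures.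
From mathcomp Require Import all_boot all_order all_algebra.
From mathcomp Require Import all_classical all_reals all_analysis.
From mathcomp Require Import ring lra ssrAC.
Import Order.TTheory GRing.Theory Num.Theory.
Import numFieldNormedType.Exports.
Local Open Scope classical_set_scope.
Local Open Scope ring_scope.
Set Implicit Arguments. Unset Strict Implicit. Unset Printing Implicit Defensive.


Section S.
Variables (R : realType) (E : normedModType R).

Fact der_scalf (k : R -> R) (g : R -> E) x :
  derivable k x 1 -> derivable g x 1 ->
  (fun h => h^-1 *: (((fun s => k s *: g s) \o shift x) (h *: 1) - k x *: g x)) @
  0^' --> k x *: 'D_1 g x + 'D_1 k x *: g x.
Proof.
move=> dk dg.
evar (fg : R -> E); rewrite [X in X @ _](_ : _ = fg) /=; last first.
  rewrite funeqE => h.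
  have -> : k (h *: 1 + x) *: g (h *: 1 + x) - k x *: g x =
    k (h *: 1 + x) *: (g (h *: 1 + x) - g x) + (k (h *: 1 + x) - k x) *: g x.
    by rewrite scalerBr scalerBl addrA subrK.
  rewrite scalerDr scalerA mulrC -scalerA.
  by rewrite [_ *: (_ *: g x)]scalerA /fg.
apply: cvgD; last first.
  apply: cvgZ; last exact: cvg_cst.
  exact: dk.
apply: cvg_comp2 (@scale_continuous _ _ (_, _)) => /=; last exact: dg.
suff : {for 0, continuous (fun h : R => k (h *: 1 + x))}.
  by move=> /continuous_withinNx; rewrite scale0r add0r.
exact/differentiable_continuous/derivable1_diffP/(derivable1P _ _ _).1.
Qed.

Lemma is_derive_scalf (k : R -> R) (g : R -> E) (x dk : R) (dg : E) :
  is_derive x 1 k dk -> is_derive x 1 g dg ->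
  is_derive x 1 (fun s => k s *: g s) (dk *: g x + k x *: dg).
Proof.
move=> [dk1 <-] [dg1 <-]; apply: DeriveDef.
  by apply/cvg_ex; eexists; exact: der_scalf.
by rewrite addrC; apply: cvg_lim => //; exact: der_scalf.
Qed.

Lemma deriv_approx (g : R -> E) (t : R) (d : E) : is_derive t 1 g d ->
  forall e, 0 < e -> exists2 del, 0 < del &
    forall h, 0 < h < del -> `|g (t + h) - g t - h *: d| <= e * h.
Proof.
move=> [dg <-] e e0.
have := dg; move=> /cvgrPdist_le /(_ e e0); rewrite near_withinE.
case/nbhs_ballP => del del0 H; exists del => // h /andP[h0 hd].
have := H h; rewrite /ball /= sub0r normrN gtr0_norm // => /(_ hd).
move=> /(_ (lt0r_neq0 h0)).
have -> : (h *: 1 + t) = t + h by rewrite addrC [h *: 1]mulr1.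
move=> Hh.
have -> : g (t + h) - g t - h *: 'D_1 g t =
   - (h *: ('D_1 g t - h^-1 *: (g (t + h) - g t))).
  by rewrite scalerBr scalerA mulfV ?gt_eqF // scale1r opprB.
by rewrite normrN normrZ gtr0_norm // mulrC ler_wpM2r // ltW.
Qed.

End S.



Section S2.
Variables (R : realType).

Lemma RI (a b : R) (psi : R -> R) : a <= b -> psi a <= 0 ->
  (forall s, a < s <= b -> (forall u, a <= u < s -> psi u <= 0) -> psi s <= 0) ->
  (forall s, a <= s < b -> psi s <= 0 ->
     exists2 d, 0 < d & forall u, s < u < s + d -> psi u <= 0) ->
  psi b <= 0.
Proof.
move=> ab pa lc step.
pose S := [set s | a <= s <= b /\ forall u, a <= u <= s -> psi u <= 0].
have Sa : S a.
  split; first by rewrite lexx ab.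
  by move=> u /andP[au ua]; have -> : u = a by apply/eqP; rewrite eq_le ua au.
have ubS : ubound S b by move=> s [/andP[_ ->]].
have hS : has_sup S by split; [exists a | exists b].
pose c := sup S.
have ac : a <= c by exact: sup_upper_bound.
have cb : c <= b by apply: ge_sup => //; exists a.
have below : forall u, a <= u < c -> psi u <= 0.
  move=> u /andP[au uc].
  have cu0 : 0 < c - u by rewrite subr_gt0.
  have [e [_ He] ce] := sup_adherent cu0 hS.
  apply: He; rewrite au /=; move: ce; rewrite opprB addrCA subrr addr0.
  exact: ltW.
have pc : psi c <= 0.
  have [ac'|] := ltP a c; last first.
    by move=> ca; have -> : c = a by apply/eqP; rewrite eq_le ca ac.
  by apply: lc; [rewrite ac' cb | exact: below].
have Sc : S c.
  split; first by rewrite ac cb.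
  move=> u /andP[au]; rewrite le_eqVlt => /orP[/eqP -> //|uc].
  by apply: below; rewrite au uc.
have [cb'|] := ltP c b; last first.
  by move=> bc; have <- : c = b by apply/eqP; rewrite eq_le cb bc.
have [d d0 Hd] := step c (andb_true_intro (conj ac cb')) pc.
pose u' := Num.min (c + d / 2) b.
have cu' : c < u'.
  by rewrite /u' lt_min cb' andbT ltrDl divr_gt0.
have Su' : S u'.
  split.
    by rewrite (le_trans ac (ltW cu')) /u' ge_min lexx orbT.
  move=> u /andP[au uu']; have [uc|cu] := leP u c.
    by apply: Sc.2; rewrite au uc.
  apply: Hd; rewrite cu /=; apply: (le_lt_trans uu').
  rewrite /u' gt_min; apply/orP; left.
  by rewrite ltrD2l; lra.
have := sup_upper_bound hS Su'; rewrite -/c => u'c.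
by move: (lt_le_trans cu' u'c); rewrite ltxx.
Qed.

End S2.



Section S3.
Variables (R : realType) (E : normedModType R).

Lemma MVI (phi : E -> R)
  (phiD : forall x y, phi (x + y) <= phi x + phi y)
  (phiZ : forall k x, 0 < k -> phi (k *: x) <= k * phi x)
  (phiN : forall x, phi x <= `|x|)
  (g dg : R -> E) (a b M : R) : a <= b ->
  (forall s, a <= s <= b -> is_derive s 1 g (dg s)) ->
  (forall s, a <= s <= b -> phi (dg s) <= M) ->
  phi (g b - g a) <= M * (b - a).
Proof.
move=> ab gd gM.
have phiL : forall x y, phi x <= phi y + `|x - y|.
  by move=> x y; rewrite -{1}(subrK y x) addrC (le_trans (phiD _ _)) // lerD2l.
have phic : continuous phi.
  move=> x; apply/cvgrPdist_le => eta eta0; near=> y.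
  rewrite ler_norml; apply/andP; split.
    rewrite lerNl opprB lerBlDl (le_trans (phiL y x)) // lerD2l.
    by rewrite distrC; near: y; apply: cvgr_dist_le => //; exact: cvg_id.
  rewrite lerBlDl (le_trans (phiL x y)) // lerD2l.
  by near: y; apply: cvgr_dist_le => //; exact: cvg_id.
suff H : forall e, 0 < e -> phi (g b - g a) <= (M + e) * (b - a).
  apply/ler_addgt0Pr => e e0.
  have := H (e / (b - a + 1)); rewrite divr_gt0 // ?ltr_wpDl ?subr_ge0 //.
  move=> /(_ isT) /le_trans; apply.
  rewrite mulrDl lerD2l; have hb : 0 < b - a + 1 by rewrite ltr_wpDl ?subr_ge0.
  by rewrite mulrAC ler_pdivrMr // ler_pM2l // lerDl.
move=> e e0; set K := M + e.
pose psi u := phi (g u - g a) - K * (u - a).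
suff : psi b <= 0 by rewrite /psi subr_le0.
apply: (RI ab).
- by rewrite /psi !subrr mulr0 subr0 (le_trans (phiN 0)) // normr0.
- move=> s /andP[aS sb] Hb.
  have gc : {for s, continuous g}.
    have [dgs _] := gd s (andb_true_intro (conj (ltW aS) sb)).
    exact/differentiable_continuous/derivable1_diffP.
  have psic : psi @ s^'- --> psi s.
    apply: cvg_at_left_filter; apply: cvgB; last first.
      by apply: cvgM; [exact: cvg_cst | apply: cvgB; [exact: cvg_id|exact: cvg_cst]].
    exact: (@continuous_comp _ _ _ (fun u => g u - g a) phi s (cvgB gc (cvg_cst _)) (phic _)).
  apply: (@closed_cvg _ _ _ _ psi (fun x : R => x <= 0) (@closed_le _ 0) _ _ psic).
  rewrite near_withinE; near=> u => us; apply: Hb; rewrite us andbT.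
  by apply: ltW; near: u; exact: lt_nbhsr.
- move=> s /andP[aS sb] ps.
  have [del del0 Hd] := deriv_approx (gd s (andb_true_intro (conj aS (ltW sb)))) e0.
  exists del => // u /andP[su usd].
  have hp : 0 < u - s by rewrite subr_gt0.
  have Hr : `|g u - g s - (u - s) *: dg s| <= e * (u - s).
    by have := Hd (u - s); rewrite subrKC; apply; rewrite hp /= ltrBlDl.
  rewrite /psi subr_le0.
  have -> : g u - g a = (g s - g a) + ((u - s) *: dg s + (g u - g s - (u - s) *: dg s)).
    by rewrite subrKC [RHS]addrC addrA subrK.
  apply: (le_trans (phiD _ _)).
  have -> : K * (u - a) = K * (s - a) + (M * (u - s) + e * (u - s)).
    by rewrite /K; ring.
  apply: lerD; first by move: ps; rewrite /psi subr_le0.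
  apply: (le_trans (phiD _ _)); apply: lerD.
    apply: (le_trans (phiZ _ _ hp)); rewrite mulrC ler_pM2r //.
    by apply: gM; rewrite aS /= ltW.
  exact: (le_trans (phiN _)).
Unshelve. all: by end_near.
Qed.

End S3.



Section S4.
Variables (R : realType) (E : normedModType R) (P : set E).
Variable Pcl : closed P.
Variable Pc : forall (a b : R) (x y : E), 0 <= a -> 0 <= b -> P x -> P y ->
         P (a *: x + b *: y).
Variable P0 : P 0.

Lemma PD x y : P x -> P y -> P (x + y).
Proof. by move=> px py; have := Pc ler01 ler01 px py; rewrite !scale1r. Qed.

Lemma PZ k x : 0 <= k -> P x -> P (k *: x).
Proof. by move=> k0 px; have := Pc k0 (lexx 0) px px; rewrite scale0r addr0. Qed.

Definition cdist (x : E) := inf [set `|x - p| | p in P].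

Let hinf x : has_inf [set `|x - p| | p in P].
Proof.
split; first by exists `|x - 0|; exists 0.
by exists 0 => _ [p _ <-].
Qed.

Lemma cdist_le x p : P p -> cdist x <= `|x - p|.
Proof. by move=> pp; apply: ge_inf; [exact: (hinf x).2 | exists p]. Qed.

Lemma cdist_norm x : cdist x <= `|x|.
Proof. by have := cdist_le x P0; rewrite subr0. Qed.

Lemma cdist_approx x e : 0 < e -> exists2 p, P p & `|x - p| < cdist x + e.
Proof. by move=> e0; have [_ [p pp <-] H] := inf_adherent e0 (hinf x); exists p. Qed.

Lemma cdistD x y : cdist (x + y) <= cdist x + cdist y.
Proof.
apply/ler_addgt0Pr => e e0.
have e20 : 0 < e / 2 by rewrite divr_gt0.
have [p pp hp] := cdist_approx x e20.
have [q pq hq] := cdist_approx y e20.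
apply: (le_trans (cdist_le (x + y) (PD pp pq))).
have -> : x + y - (p + q) = (x - p) + (y - q) by rewrite opprD addrACA.
apply: (le_trans (ler_normD _ _)).
have -> : cdist x + cdist y + e = (cdist x + e / 2) + (cdist y + e / 2).
  by rewrite addrACA -splitr.
by apply: lerD; apply: ltW.
Qed.

Lemma cdistZ k x : 0 < k -> cdist (k *: x) <= k * cdist x.
Proof.
move=> k0; apply/ler_addgt0Pr => e e0.
have ek0 : 0 < e / k by rewrite divr_gt0.
have [p pp hp] := cdist_approx x ek0.
apply: (le_trans (cdist_le (k *: x) (PZ (ltW k0) pp))).
rewrite -scalerBr normrZ gtr0_norm //.
have -> : k * cdist x + e = k * (cdist x + e / k).
  by rewrite mulrDr mulrCA mulfV ?gt_eqF // mulr1.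
by rewrite ler_pM2l // ltW.
Qed.

Lemma cdist_in x : P x -> cdist x <= 0.
Proof. by move=> px; have := cdist_le x px; rewrite subrr normr0. Qed.

Lemma cdist0P x : cdist x <= 0 -> P x.
Proof.
move=> dx; apply: contrapT => npx.
have : nbhs x (~` P).
  by apply: open_nbhs_nbhs; split => //; exact: closed_openC.
move=> /nbhs_ballP [r r0 Hr].
have [p pp hp] := cdist_approx x r0.
apply: (Hr p) => //; rewrite -ball_normE /ball_ /=.
by apply: (lt_le_trans hp); rewrite gerDr.
Qed.

End S4.



Section S5.
Variables (R : realType) (E : normedModType R).

Definition w0 (x0 x1 x2 x3 : R) := ((x0 - x1) * (x0 - x2) * (x0 - x3))^-1.

Lemma divdiff3E (f : R -> E) x0 x1 x2 x3 :
  divdiff3 f x0 x1 x2 x3 =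
    w0 x0 x1 x2 x3 *: f x0 + w0 x1 x0 x2 x3 *: f x1 +
    w0 x2 x0 x1 x3 *: f x2 + w0 x3 x0 x1 x2 *: f x3.
Proof.
rewrite /divdiff3 /w0 !big_ord_recr big_ord0 /= add0r.
rewrite !(big_mkcond (fun k : 'I_4 => k != _)) /=.
rewrite !big_ord_recr big_ord0 /= !mul1r.
by rewrite !big_ord0 !mul1r !mulr1.
Qed.

Definition ccoef (x0 x1 x2 x3 : R) (j : 'I_4) :=
  let s := [:: x0; x1; x2; x3] in (\prod_(k < 4 | k != j) (s`_j - s`_k))^-1.

Lemma sum_ccoef (phi : R -> R) x0 x1 x2 x3 :
  \sum_(j < 4) ccoef x0 x1 x2 x3 j * phi ([:: x0; x1; x2; x3]`_j) =
    w0 x0 x1 x2 x3 * phi x0 + w0 x1 x0 x2 x3 * phi x1 +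
    w0 x2 x0 x1 x3 * phi x2 + w0 x3 x0 x1 x2 * phi x3.
Proof.
rewrite /ccoef /w0 !big_ord_recr big_ord0 /= add0r.
rewrite !(big_mkcond (fun k : 'I_4 => k != _)) /=.
rewrite !big_ord_recr big_ord0 /= !mul1r.
by rewrite !big_ord0 !mul1r !mulr1.
Qed.

Lemma divdiff3_sum (f : R -> E) x0 x1 x2 x3 :
  divdiff3 f x0 x1 x2 x3 =
  \sum_(j < 4) ccoef x0 x1 x2 x3 j *: f ([:: x0; x1; x2; x3]`_j).
Proof. by []. Qed.

Section moments.
Variables (x0 x1 x2 x3 : R).
Hypothesis (h01 : x0 < x1) (h12 : x1 < x2) (h23 : x2 < x3).

Let n01 : x0 - x1 != 0. Proof. by rewrite subr_eq0 lt_eqF. Qed.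
Let n02 : x0 - x2 != 0. Proof. by rewrite subr_eq0 lt_eqF // (lt_trans h01). Qed.
Let n03 : x0 - x3 != 0.
Proof. by rewrite subr_eq0 lt_eqF // (lt_trans h01) // (lt_trans h12). Qed.
Let n12 : x1 - x2 != 0. Proof. by rewrite subr_eq0 lt_eqF. Qed.
Let n13 : x1 - x3 != 0. Proof. by rewrite subr_eq0 lt_eqF // (lt_trans h12). Qed.
Let n23 : x2 - x3 != 0. Proof. by rewrite subr_eq0 lt_eqF. Qed.
Let n10 : x1 - x0 != 0. Proof. by rewrite -opprB oppr_eq0. Qed.
Let n20 : x2 - x0 != 0. Proof. by rewrite -opprB oppr_eq0. Qed.
Let n30 : x3 - x0 != 0. Proof. by rewrite -opprB oppr_eq0. Qed.
Let n21 : x2 - x1 != 0. Proof. by rewrite -opprB oppr_eq0. Qed.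
Let n31 : x3 - x1 != 0. Proof. by rewrite -opprB oppr_eq0. Qed.
Let n32 : x3 - x2 != 0. Proof. by rewrite -opprB oppr_eq0. Qed.
Ltac nzt := rewrite ?n01 ?n02 ?n03 ?n12 ?n13 ?n23 ?n10 ?n20 ?n30 ?n21 ?n31 ?n32.

Lemma mom0 : \sum_(j < 4) ccoef x0 x1 x2 x3 j * 1 = 0.
Proof.
rewrite (sum_ccoef (fun=> 1)) /w0 !mulr1.
by field; nzt.
Qed.

Lemma mom1 t : \sum_(j < 4) ccoef x0 x1 x2 x3 j * ([:: x0; x1; x2; x3]`_j - t) = 0.
Proof.
rewrite (sum_ccoef (fun s => s - t)) /w0.
by field; nzt.
Qed.

Lemma mom2 t : \sum_(j < 4) ccoef x0 x1 x2 x3 j * (([:: x0; x1; x2; x3]`_j - t) ^+ 2 / 2) = 0.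
Proof.
rewrite (sum_ccoef (fun s => (s - t) ^+ 2 / 2)) /w0.
by field; nzt.
Qed.

Lemma mom3 t : \sum_(j < 4) ccoef x0 x1 x2 x3 j * (([:: x0; x1; x2; x3]`_j - t) ^+ 3 / 6) = 6^-1.
Proof.
rewrite (sum_ccoef (fun s => (s - t) ^+ 3 / 6)) /w0.
by field; nzt.
Qed.

Lemma dd_taylor (f : R -> E) t A B C F :
  divdiff3 f x0 x1 x2 x3 =
  divdiff3 (fun s => f s - (A + (s - t) *: B + ((s - t) ^+ 2 / 2) *: C
                             + ((s - t) ^+ 3 / 6) *: F)) x0 x1 x2 x3 + 6^-1 *: F.
Proof.
rewrite !divdiff3_sum.
under [X in _ = X + _]eq_bigr do rewrite scalerBr.
rewrite sumrB.
suff -> : \sum_(j < 4) ccoef x0 x1 x2 x3 j *: (A + ([:: x0; x1; x2; x3]`_j - t) *: B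
   + (([:: x0; x1; x2; x3]`_j - t) ^+ 2 / 2) *: C
   + (([:: x0; x1; x2; x3]`_j - t) ^+ 3 / 6) *: F) = 6^-1 *: F by rewrite subrK.
under eq_bigr do rewrite !scalerDr !scalerA.
rewrite !big_split /= -!scaler_suml mom1 mom2 mom3.
have := mom0; under eq_bigr do rewrite mulr1.
by move=> ->; rewrite !scale0r !add0r.
Qed.

End moments.

End S5.



Section S6.
Variables (R : realType) (E : normedModType R).

Lemma dpow1 (t x : R) : is_derive x 1 (fun s : R => s - t) 1.
Proof.
have -> : (fun s : R => s - t) = (@id R - cst t) by [].
by apply: is_derive_eq; rewrite subr0.
Qed.

Lemma dpow2 (t x : R) : is_derive x 1 (fun s : R => (s - t) ^+ 2 / 2) (x - t).
Proof.
have -> : (fun s : R => (s - t) ^+ 2 / 2) = 2^-1 \*: ((@id R - cst t) ^+ 2).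
  by apply/funext => s /=; rewrite mulrC.
apply: is_derive_eq.
rewrite /= expr1 subr0; change (2^-1 * ((2 * (x - t)) * 1) = x - t).
by field.
Qed.

Lemma dpow3 (t x : R) : is_derive x 1 (fun s : R => (s - t) ^+ 3 / 6) ((x - t) ^+ 2 / 2).
Proof.
have -> : (fun s : R => (s - t) ^+ 3 / 6) = 6^-1 \*: ((@id R - cst t) ^+ 3).
  by apply/funext => s /=; rewrite mulrC.
apply: is_derive_eq.
rewrite /= subr0; change (6^-1 * ((3 * (x - t) ^+ 2) * 1) = (x - t) ^+ 2 / 2).
by field.
Qed.

Lemma dquad (p q r x : R) :
  is_derive x 1 (fun s : R => p * s ^+ 2 + q * s + r) (2 * p * x + q).
Proof.
have -> : (fun s : R => p * s ^+ 2 + q * s + r) =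
   p \*: ((@id R) ^+ 2) + q \*: (@id R) + cst r by [].
apply: is_derive_eq.
rewrite /= expr1; change (p * (2 * x * 1) + q * 1 + 0 = 2 * p * x + q).
by ring.
Qed.

Lemma dlin (p q x : R) : is_derive x 1 (fun s : R => 2 * p * s + q) (2 * p).
Proof.
have -> : (fun s : R => 2 * p * s + q) = (2 * p) \*: (@id R) + cst q by [].
apply: is_derive_eq.
change ((2 * p) * 1 + 0 = 2 * p).
by ring.
Qed.

Lemma is_derive_scalc (k : R -> R) (w : E) (x dk : R) :
  is_derive x 1 k dk -> is_derive x 1 (fun s => k s *: w) (dk *: w).
Proof.
move=> dkx.
have H : is_derive x 1 (fun s => k s *: w) (dk *: w + k x *: 0) :=
  is_derive_scalf dkx (is_derive_cst w x 1).
by rewrite scaler0 addr0 in H.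
Qed.

Lemma is_derive1 (g : R -> E) (x : R) :
  derivable g x 1 -> is_derive x 1 g (derive1 g x).
Proof. by move=> d; rewrite derive1E; exact: derivableP. Qed.

End S6.



Lemma ac1 (V : zmodType) (a b c d e g : V) :
  (b - a) + (d - c) + (g - e) = (b - c) + (d - e) + g - a.
Proof. by rewrite !addrA [LHS](ACl (1*4*3*6*5*2)). Qed.

Section S7.
Variables (R : realType) (E : normedModType R) (P : set E) (f : R -> E) (J : set R).
Variable Pcl : closed P.
Variable Pc : forall (a b : R) (x y : E), 0 <= a -> 0 <= b -> P x -> P y ->
         P (a *: x + b *: y).
Variable P0 : P 0.
Variable Hd : forall s, J s ->
  [/\ derivable f s 1, derivable (derive1 f) s 1 & derivable (derive1 (derive1 f)) s 1].
Variable HP : forall s, J s -> P (derive1 (derive1 (derive1 f)) s).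

Definition Kq (p q r s : R) := p * s ^+ 2 + q * s + r.
Definition Kl (p q s : R) := 2 * p * s + q.
Definition Gf (p q r : R) (s : R) : E :=
  Kq p q r s *: derive1 (derive1 f) s - Kl p q s *: derive1 f s + (2 * p) *: f s.

Lemma Gder p q r s : J s ->
  is_derive s 1 (Gf p q r) (Kq p q r s *: derive1 (derive1 (derive1 f)) s).
Proof.
case/Hd => d0 d1 d2.
have h1 := is_derive_scalf (dquad p q r s) (is_derive1 d2).
have h2 := is_derive_scalf (dlin p q s) (is_derive1 d1).
have h3 : is_derive s 1 ((2 * p) \*: f) ((2 * p) *: derive1 f s) :=
  is_deriveZ _ (is_derive1 d0).
have H : is_derive s 1 (Gf p q r)
   ((2 * p * s + q) *: derive1 (derive1 f) s + Kq p q r s *: derive1 (derive1 (derive1 f)) s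
    - ((2 * p) *: derive1 f s + Kl p q s *: derive1 (derive1 f) s)
    + (2 * p) *: derive1 f s) := is_deriveD (is_deriveB h1 h2) h3.
apply: is_derive_eq H _.
rewrite /Kl opprD !addrA (ACl (1*4*2*3*5)) /=.
have e : forall x y z : E, x - x + y - z + z = y.
  by move=> x y z; rewrite subrr add0r subrK.
exact: e.
Qed.

Lemma Mcone p q r a b : a <= b -> (forall s, a <= s <= b -> J s) ->
  (forall s, a <= s <= b -> 0 <= Kq p q r s) -> P (Gf p q r b - Gf p q r a).
Proof.
move=> ab hJ hK; apply: (cdist0P Pcl P0).
have := @MVI R E (cdist P) (cdistD Pc P0) (fun k x => @cdistZ _ _ _ Pc P0 k x) (cdist_norm P0)
  (Gf p q r) (fun s => Kq p q r s *: derive1 (derive1 (derive1 f)) s) a b 0 ab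
  (fun s hs => Gder p q r (hJ s hs)).
rewrite mul0r; apply => s hs.
exact/(cdist_in P0)/(PZ Pc (hK s hs))/HP/hJ.
Qed.

Lemma Gdiff p q r p' q' r' s :
  Kq p q r s = Kq p' q' r' s -> Kl p q s = Kl p' q' s ->
  Gf p q r s - Gf p' q' r' s = (2 * p - 2 * p') *: f s.
Proof.
by move=> e e'; rewrite /Gf e e' opprD addrACA subrr add0r -scalerBl.
Qed.

Lemma Gzero p q r s : Kq p q r s = 0 -> Kl p q s = 0 -> Gf p q r s = (2 * p) *: f s.
Proof. by move=> e e'; rewrite /Gf e e' !scale0r subrr add0r. Qed.

Lemma back_int x0 x1 x2 x3 : x0 < x1 -> x1 < x2 -> x2 < x3 ->
  (forall s, x0 <= s <= x3 -> J s) -> P (divdiff3 f x0 x1 x2 x3).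
Proof.
move=> h01 h12 h23 hJ.
have h02 := lt_trans h01 h12; have h13 := lt_trans h12 h23.
have h03 := lt_trans h02 h23.
have n01 : x0 - x1 != 0 by rewrite subr_eq0 lt_eqF.
have n02 : x0 - x2 != 0 by rewrite subr_eq0 lt_eqF.
have n03 : x0 - x3 != 0 by rewrite subr_eq0 lt_eqF.
have n12 : x1 - x2 != 0 by rewrite subr_eq0 lt_eqF.
have n13 : x1 - x3 != 0 by rewrite subr_eq0 lt_eqF.
have n23 : x2 - x3 != 0 by rewrite subr_eq0 lt_eqF.
have n10 : x1 - x0 != 0 by rewrite subr_eq0 gt_eqF.
have n20 : x2 - x0 != 0 by rewrite subr_eq0 gt_eqF.
have n30 : x3 - x0 != 0 by rewrite subr_eq0 gt_eqF.
have n21 : x2 - x1 != 0 by rewrite subr_eq0 gt_eqF.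
have n31 : x3 - x1 != 0 by rewrite subr_eq0 gt_eqF.
have n32 : x3 - x2 != 0 by rewrite subr_eq0 gt_eqF.
pose W0 := w0 x0 x1 x2 x3; pose W1 := w0 x1 x0 x2 x3.
pose W2 := w0 x2 x0 x1 x3; pose W3 := w0 x3 x0 x1 x2.
have W0n : W0 <= 0.
  rewrite /W0 /w0 invr_le0 ltW // pmulr_rlt0 ?subr_lt0 //.
  by rewrite nmulr_rgt0 ?subr_lt0.
have W3p : 0 <= W3.
  by rewrite /W3 /w0 invr_ge0 ltW // !mulr_gt0 // subr_gt0.
pose pA := - W0 / 2; pose qA := W0 * x0; pose rA := - W0 * x0 ^+ 2 / 2.
pose pB := (W2 + W3) / 2; pose qB := - (W2 * x2 + W3 * x3).
pose rB := (W2 * x2 ^+ 2 + W3 * x3 ^+ 2) / 2.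
pose pC := W3 / 2; pose qC := - (W3 * x3); pose rC := W3 * x3 ^+ 2 / 2.
have PA : P (Gf pA qA rA x1 - Gf pA qA rA x0).
  apply: Mcone; first exact: ltW.
    by move=> s /andP[a b]; apply: hJ; rewrite a /= (le_trans b) // ltW.
  move=> s _; have -> : Kq pA qA rA s = - W0 * (s - x0) ^+ 2 / 2.
    by rewrite /Kq /pA /qA /rA; field.
  apply: mulr_ge0; last by rewrite invr_ge0.
  by apply: mulr_ge0; [rewrite oppr_ge0 | exact: sqr_ge0].
have PC : P (Gf pC qC rC x3 - Gf pC qC rC x2).
  apply: Mcone; first exact: ltW.
    by move=> s /andP[a b]; apply: hJ; rewrite b andbT (le_trans _ a) // ltW.
  move=> s _; have -> : Kq pC qC rC s = W3 * (x3 - s) ^+ 2 / 2.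
    by rewrite /Kq /pC /qC /rC; field.
  apply: mulr_ge0; last by rewrite invr_ge0.
  by apply: mulr_ge0; [ | exact: sqr_ge0].
have PB : P (Gf pB qB rB x2 - Gf pB qB rB x1).
  apply: Mcone; first exact: ltW.
    move=> s /andP[a b]; apply: hJ.
    by rewrite (le_trans _ a) ?(le_trans b) // ltW.
  move=> s /andP[a b].
  pose N := - ((x3 - x0) * (x3 - x1)) * (x2 - s) ^+ 2 + (x2 - x0) * (x2 - x1) * (x3 - s) ^+ 2.
  pose Dn := (x2 - x0) * (x2 - x1) * (x3 - x2) * (x3 - x0) * (x3 - x1).
  have Dp : 0 < 2 * Dn by rewrite /Dn !mulr_gt0 // subr_gt0.
  have KN : Kq pB qB rB s * (2 * Dn) = N.
    rewrite /Kq /pB /qB /rB /N /Dn /W2 /W3 /w0.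
    by field; rewrite ?n01 ?n02 ?n03 ?n12 ?n13 ?n23 ?n10 ?n20 ?n30 ?n21 ?n31 ?n32.
  rewrite -(pmulr_lge0 _ Dp) KN.
  pose N0 := (x2 - x1) * (x3 - x1) * (x1 - x0) * (x3 - x2).
  pose Nb := (x2 - x0) * (x2 - x1) * (x3 - x2) ^+ 2.
  pose ka := (x3 - x0) * (x3 - x1) - (x2 - x0) * (x2 - x1).
  have kap : 0 <= ka.
    rewrite /ka subr_ge0; nra.
  have id : (x2 - x1) * N = (x2 - s) * N0 + (s - x1) * Nb + (x2 - x1) * ka * (s - x1) * (x2 - s).
    by rewrite /N /N0 /Nb /ka; ring.
  have : 0 <= (x2 - x1) * N.
    rewrite id; apply: addr_ge0; first apply: addr_ge0.
    - by rewrite !mulr_ge0 // subr_ge0 // ltW.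
    - by rewrite !mulr_ge0 // ?sqr_ge0 // subr_ge0 // ltW.
    - by rewrite !mulr_ge0 // subr_ge0 // ltW.
  by rewrite pmulr_rge0 // subr_gt0.
have := PD Pc (PD Pc PA PB) PC.
rewrite ac1.
have eA1 : Kq pA qA rA x1 = Kq pB qB rB x1.
  rewrite /Kq /pA /qA /rA /pB /qB /rB /W0 /W2 /W3 /w0.
  by field; rewrite ?n01 ?n02 ?n03 ?n12 ?n13 ?n23 ?n10 ?n20 ?n30 ?n21 ?n31 ?n32.
have eA2 : Kl pA qA x1 = Kl pB qB x1.
  rewrite /Kl /pA /qA /pB /qB /W0 /W2 /W3 /w0.
  by field; rewrite ?n01 ?n02 ?n03 ?n12 ?n13 ?n23 ?n10 ?n20 ?n30 ?n21 ?n31 ?n32.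
have eB1 : Kq pB qB rB x2 = Kq pC qC rC x2.
  by rewrite /Kq /pB /qB /rB /pC /qC /rC; field.
have eB2 : Kl pB qB x2 = Kl pC qC x2.
  by rewrite /Kl /pB /qB /pC /qC; field.
have eC1 : Kq pC qC rC x3 = 0 by rewrite /Kq /pC /qC /rC; field.
have eC2 : Kl pC qC x3 = 0 by rewrite /Kl /pC /qC; field.
have eD1 : Kq pA qA rA x0 = 0 by rewrite /Kq /pA /qA /rA; field.
have eD2 : Kl pA qA x0 = 0 by rewrite /Kl /pA /qA; field.
rewrite (Gdiff eA1 eA2) (Gdiff eB1 eB2) (Gzero eC1 eC2) (Gzero eD1 eD2).
have -> : 2 * pA - 2 * pB = W1.
  rewrite /pA /pB /W0 /W1 /W2 /W3 /w0.
  by field; rewrite ?n01 ?n02 ?n03 ?n12 ?n13 ?n23 ?n10 ?n20 ?n30 ?n21 ?n31 ?n32.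
have -> : 2 * pB - 2 * pC = W2 by rewrite /pB /pC; field.
have -> : 2 * pC = W3 by rewrite /pC; field.
have -> : 2 * pA = - W0 by rewrite /pA; field.
rewrite divdiff3E scaleNr opprK.
by rewrite [X in P X](ACl (4*1*2*3)).
Qed.

End S7.



Section S8.
Variables (R : realType) (E : normedModType R).

Lemma cvg_w0 (F : set_system R) (FF : ProperFilter F) (a b c d : R -> R) la lb lc ld :
  a @ F --> la -> b @ F --> lb -> c @ F --> lc -> d @ F --> ld ->
  (la - lb) * (la - lc) * (la - ld) != 0 ->
  (fun z => w0 (a z) (b z) (c z) (d z)) @ F --> w0 la lb lc ld.
Proof.
move=> ca cb cc cd nz; rewrite /w0.
apply: (@cvgV _ _ _ _ (fun z => (a z - b z) * (a z - c z) * (a z - d z))) => //.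
by apply: cvgM; [apply: cvgM|]; apply: cvgB.
Qed.

Lemma cvg_dd (f : R -> E) (F : set_system R) (FF : ProperFilter F) (u v : R -> R)
  lu lv x1 x2 :
  u @ F --> lu -> v @ F --> lv ->
  (fun z => f (u z)) @ F --> f lu -> (fun z => f (v z)) @ F --> f lv ->
  lu < x1 -> x1 < x2 -> x2 < lv ->
  (fun z => divdiff3 f (u z) x1 x2 (v z)) @ F --> divdiff3 f lu x1 x2 lv.
Proof.
move=> cu cv cfu cfv h1 h2 h3.
have h13 := lt_trans h1 h2; have h23 := lt_trans h13 h3; have h24 := lt_trans h2 h3.
have nz : forall x y : R, x < y -> x - y != 0 by move=> x y xy; rewrite subr_eq0 lt_eqF.
have nz' : forall x y : R, x < y -> y - x != 0 by move=> x y xy; rewrite subr_eq0 gt_eqF.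
rewrite divdiff3E.
under eq_fun do rewrite divdiff3E.
have cx1 : (fun=> x1) @ F --> x1 by exact: cvg_cst.
have cx2 : (fun=> x2) @ F --> x2 by exact: cvg_cst.
apply: cvgD; [apply: cvgD; [apply: cvgD|]|]; apply: cvgZ.
- by apply: cvg_w0 => //; rewrite !mulf_neq0 // subr_eq0 neq_lt ?h1 ?h2 ?h3 ?h13 ?h23 ?h24 ?orbT.
- exact: cfu.
- by apply: cvg_w0 => //; rewrite !mulf_neq0 // subr_eq0 neq_lt ?h1 ?h2 ?h3 ?h13 ?h23 ?h24 ?orbT.
- exact: cvg_cst.
- by apply: cvg_w0 => //; rewrite !mulf_neq0 // subr_eq0 neq_lt ?h1 ?h2 ?h3 ?h13 ?h23 ?h24 ?orbT.
- exact: cvg_cst.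
- by apply: cvg_w0 => //; rewrite !mulf_neq0 // subr_eq0 neq_lt ?h1 ?h2 ?h3 ?h13 ?h23 ?h24 ?orbT.
- exact: cfv.
Qed.

End S8.



Section S9.
Variables (R : realType) (E : normedModType R).

Lemma int_itv (I : set R) x y z : is_interval I -> I x -> I z -> x < y -> y < z ->
  interior I y.
Proof.
move=> iI Ix Iz xy yz; rewrite /interior /=.
near=> w; apply: (iI x z) => //; apply/andP; split; apply: ltW; near: w.
  exact: lt_nbhsr.
exact: lt_nbhsl.
Unshelve. all: by end_near.
Qed.

Lemma MVIn (g dg : R -> E) (a b M : R) : a <= b ->
  (forall s, a <= s <= b -> is_derive s 1 g (dg s)) ->
  (forall s, a <= s <= b -> `|dg s| <= M) ->
  `|g b - g a| <= M * (b - a).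
Proof.
apply: MVI; first exact: ler_normD.
  by move=> k x k0; rewrite normrZ gtr0_norm.
by move=> x.
Qed.

End S9.



Ltac nzs := repeat (apply/andP; split);
  (rewrite ?subr_eq0 neq_lt; apply/orP; first [left; lra | right; lra]).

Section S10.
Variables (R : realType) (E : normedModType R) (P : set E) (f : R -> E) (I : set R).
Variable Pcl : closed P.
Variable Pc : forall (a b : R) (x y : E), 0 <= a -> 0 <= b -> P x -> P y ->
         P (a *: x + b *: y).
Variable P0 : P 0.
Variable iI : is_interval I.
Variable Hd : forall s, interior I s ->
  [/\ derivable f s 1, derivable (derive1 f) s 1 & derivable (derive1 (derive1 f)) s 1].
Variable H3 : three_convex P I f.

Lemma forward t : interior I t -> P (derive1 (derive1 (derive1 f)) t).
Proof.
move=> ti.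
set f1 := derive1 f; set f2 := derive1 f1; set f3 := derive1 f2.
have It : I t by exact: nbhs_singleton ti.
have /nbhs_ballP [r /= r0 Hr] := ti.
have inI : forall y, 0 <= y < r -> I (t + y).
  move=> y /andP[y0 yr]; apply: Hr; rewrite -ball_normE /ball_ /=.
  by rewrite opprD addrA subrr add0r normrN ger0_norm.
have inIm : I (t - r / 2).
  apply: Hr; rewrite -ball_normE /ball_ /= opprB addrC subrK.
  by rewrite ger0_norm ?divr_ge0 ?ltW //; lra.
have inJ : forall y, 0 <= y < r / 2 -> interior I (t + y).
  move=> y /andP[y0 yr]; apply: (int_itv iI inIm (inI (r / 2) _)).
  - by rewrite divr_ge0 ?ltW //=; lra.
  - lra.
  - lra.
have der : forall s, interior I s ->
   [/\ is_derive s 1 f (f1 s), is_derive s 1 f1 (f2 s) & is_derive s 1 f2 (f3 s)].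
  by move=> s /Hd [d0 d1 d2]; split; exact: is_derive1.
pose v := 6^-1 *: f3 t.
suff Pv : P v.
  have -> : f3 t = 6 *: v by rewrite /v scalerA mulfV ?scale1r.
  by apply: (PZ Pc) => //.
apply: (cdist0P Pcl P0); apply/ler_addgt0Pr => eta eta0; rewrite add0r.
pose e := eta / 9.
have e0 : 0 < e by rewrite divr_gt0.
have [_ _ d2t] := der t ti.
have [del del0 Hdel] := deriv_approx d2t e0.
pose rho := Num.min del (r / 2) / 2.
have rho0 : 0 < rho by rewrite divr_gt0 // lt_min del0 divr_gt0.
have m0 : 0 < Num.min del (r / 2) by rewrite lt_min del0 divr_gt0.
have m1 : Num.min del (r / 2) <= del by rewrite ge_min lexx.
have m2 : Num.min del (r / 2) <= r / 2 by rewrite ge_min lexx orbT.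
have rhod : rho < del by rewrite /rho; lra.
have rhor : rho < r / 2 by rewrite /rho; lra.
have T1b : forall s, t <= s <= t + rho ->
    `|f2 s - (f2 t + (s - t) *: f3 t)| <= e * (s - t).
  move=> s /andP[ts st]; have [->|ts'] := eqVneq s t.
    by rewrite subrr scale0r addr0 subrr normr0 mulr0.
  have ts2 : t < s by rewrite lt_neqAle eq_sym ts' ts.
  have := Hdel (s - t); rewrite subrKC opprD addrA; apply.
  by rewrite subr_gt0 ts2 /=; lra.
pose T2 := fun s => f1 s - (f1 t + (s - t) *: f2 t + ((s - t) ^+ 2 / 2) *: f3 t).
have T2d : forall s, interior I s ->
    is_derive s 1 T2 (f2 s - (f2 t + (s - t) *: f3 t)).
  move=> s si; have [_ d1 _] := der s si.
  have hb : is_derive s 1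
      (fun s => f1 t + (s - t) *: f2 t + ((s - t) ^+ 2 / 2) *: f3 t)
      (0 + 1 *: f2 t + (s - t) *: f3 t) :=
    is_deriveD (is_deriveD (is_derive_cst (f1 t) s 1) (is_derive_scalc _ (dpow1 t s)))
      (is_derive_scalc _ (dpow2 t s)).
  have H : is_derive s 1 T2 (f2 s - (0 + 1 *: f2 t + (s - t) *: f3 t)) :=
    is_deriveB d1 hb.
  by apply: is_derive_eq H _; rewrite add0r scale1r.
have T2t : T2 t = 0.
  by rewrite /T2 subrr scale0r expr0n /= mul0r scale0r !addr0 subrr.
have T2b : forall y, 0 <= y <= rho -> `|T2 (t + y)| <= e * y ^+ 2.
  move=> y /andP[y0 yr].
  have := @MVIn R E T2 (fun s => f2 s - (f2 t + (s - t) *: f3 t)) t (t + y) (e * y).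
  have -> : e * y ^+ 2 = e * y * (t + y - t) by ring.
  rewrite T2t subr0; apply.
  - by rewrite lerDl.
  - move=> s /andP[ts sy]; apply: T2d.
    rewrite -(subrKC t s); apply: inJ; rewrite subr_ge0 ts /=; lra.
  - move=> s /andP[ts sy]; apply: (le_trans (T1b s _)).
      by rewrite ts /= (le_trans sy) // lerD2l.
    by rewrite ler_pM2l // lerBlDl.
pose T3 := fun s => f s - (f t + (s - t) *: f1 t + ((s - t) ^+ 2 / 2) *: f2 t
                           + ((s - t) ^+ 3 / 6) *: f3 t).
have T3d : forall s, interior I s -> is_derive s 1 T3 (T2 s).
  move=> s si; have [d0 _ _] := der s si.
  have hb : is_derive s 1
      (fun s => f t + (s - t) *: f1 t + ((s - t) ^+ 2 / 2) *: f2 t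
                + ((s - t) ^+ 3 / 6) *: f3 t)
      (0 + 1 *: f1 t + (s - t) *: f2 t + ((s - t) ^+ 2 / 2) *: f3 t) :=
    is_deriveD (is_deriveD (is_deriveD (is_derive_cst (f t) s 1)
      (is_derive_scalc _ (dpow1 t s))) (is_derive_scalc _ (dpow2 t s)))
      (is_derive_scalc _ (dpow3 t s)).
  have H : is_derive s 1 T3
      (f1 s - (0 + 1 *: f1 t + (s - t) *: f2 t + ((s - t) ^+ 2 / 2) *: f3 t)) :=
    is_deriveB d0 hb.
  by apply: is_derive_eq H _; rewrite add0r scale1r.
have T3t : T3 t = 0.
  by rewrite /T3 subrr scale0r !expr0n /= !mul0r !scale0r !addr0 subrr.
have T3b : forall y, 0 <= y <= rho -> `|T3 (t + y)| <= e * y ^+ 3.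
  move=> y /andP[y0 yr].
  have := @MVIn R E T3 T2 t (t + y) (e * y ^+ 2).
  have -> : e * y ^+ 3 = e * y ^+ 2 * (t + y - t) by ring.
  rewrite T3t subr0; apply.
  - by rewrite lerDl.
  - move=> s /andP[ts sy]; apply: T3d.
    rewrite -(subrKC t s); apply: inJ; rewrite subr_ge0 ts /=; lra.
  - move=> s /andP[ts sy]; rewrite -(subrKC t s).
    apply: (le_trans (T2b (s - t) _)).
      by rewrite subr_ge0 ts /=; lra.
    rewrite ler_pM2l // ler_sqr ?nnegrE ?subr_ge0 //.
    by rewrite lerBlDl.
pose h := rho / 3.
have h0 : 0 < h by rewrite divr_gt0.
have hn : h != 0 by rewrite gt_eqF.
have o1 : t < t + h by lra.
have o2 : t + h < t + 2 * h by lra.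
have o3 : t + 2 * h < t + 3 * h by lra.
pose D := divdiff3 f t (t + h) (t + 2 * h) (t + 3 * h).
have PDD : P D.
  apply: H3 => //; apply: inI; rewrite /h; apply/andP; split; lra.
have eq : D = divdiff3 T3 t (t + h) (t + 2 * h) (t + 3 * h) + v :=
  dd_taylor o1 o2 o3 f t (f t) (f1 t) (f2 t) (f3 t).
rewrite -(subrK D v).
apply: (le_trans (cdistD Pc P0 _ _)).
apply: (le_trans (lerD (lexx _) (cdist_in P0 PDD))); rewrite addr0.
  apply: (le_trans (cdist_norm P0 _)).
  rewrite eq opprD addrCA subrr addr0 normrN divdiff3E T3t scaler0 add0r.
  apply: (le_trans (ler_normD _ _)); rewrite -/(t + 3 * h).
  apply: le_trans (lerD (ler_normD _ _) (lexx _)) _.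
  rewrite !normrZ.
  have eW1 : w0 (t + h) t (t + 2 * h) (t + 3 * h) = (2 * h ^+ 3)^-1 by rewrite /w0; field; nzs.
  have eW2 : w0 (t + 2 * h) t (t + h) (t + 3 * h) = - (2 * h ^+ 3)^-1 by rewrite /w0; field; nzs.
  have eW3 : w0 (t + 3 * h) t (t + h) (t + 2 * h) = (6 * h ^+ 3)^-1 by rewrite /w0; field; nzs.
  rewrite eW1 eW2 eW3 normrN !gtr0_norm ?invr_gt0 ?mulr_gt0 ?exprn_gt0 //.
  have -> : eta = (2 * h ^+ 3)^-1 * (e * h ^+ 3) + (2 * h ^+ 3)^-1 * (e * (2 * h) ^+ 3)
     + (6 * h ^+ 3)^-1 * (e * (3 * h) ^+ 3).
    by rewrite /e; field.
  apply: lerD; [apply: lerD|]; rewrite ler_pM2l ?invr_gt0 ?mulr_gt0 ?exprn_gt0 //.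
  - by apply: T3b; apply/andP; split; rewrite /h; lra.
  - by apply: T3b; apply/andP; split; rewrite /h; lra.
  - by apply: T3b; apply/andP; split; rewrite /h; lra.
Qed.

End S10.



Theorem theorem10 (R : realType) (E : completeNormedModType R) (P : set E)
  (I : set R) (f : R -> E) :
  ordered_banach_cone P ->
  is_interval I ->
  {within I, continuous f} ->
  (forall t, interior I t ->
     [/\ derivable f t 1, derivable (derive1n 1 f) t 1
       & derivable (derive1n 2 f) t 1]) ->
  (three_convex P I f <-> forall t, interior I t -> P (derive1n 3 f t)).
Proof.
case=> Pcl Pc Pgen _ _ iI fc Hd.
have P0 : P 0.
  have [x [y [px _ _]]] := Pgen 0.
  by have := Pc 0 0 x x (lexx 0) (lexx 0) px px; rewrite !scale0r addr0.
have Hd' : forall s, interior I s -> [/\ derivable f s 1,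
   derivable (derive1 f) s 1 & derivable (derive1 (derive1 f)) s 1] := Hd.
split.
  by move=> H3 t ti; exact: (forward Pcl Pc P0 iI Hd' H3 ti).
move=> HP x0 x1 x2 x3 I0 I1 I2 I3 h01 h12 h23.
have HP' : forall s, interior I s -> P (derive1 (derive1 (derive1 f)) s) := HP.
have sub : forall a b, I a -> I b -> `[a, b] `<=` I.
  move=> a b Ia Ib z; rewrite /= in_itv /= => /andP[az zb].
  exact: (iI a b Ia Ib z (andb_true_intro (conj az zb))).
have [_ _ fl] := (continuous_within_itvP _ h23).1 (continuous_subspaceW (sub _ _ I2 I3) fc).
have [_ fr _] := (continuous_within_itvP _ h01).1 (continuous_subspaceW (sub _ _ I0 I1) fc).
have inner : forall u v, x0 < u -> u < x1 -> x2 < v -> v < x3 ->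
    P (divdiff3 f u x1 x2 v).
  move=> u v u0 u1 v2 v3.
  apply: (back_int Pcl Pc P0 Hd' HP') => // s /andP[us sv].
  apply: (int_itv iI I0 I3); [exact: lt_le_trans us | exact: le_lt_trans v3].
have step1 : forall u, x0 < u -> u < x1 -> P (divdiff3 f u x1 x2 x3).
  move=> u u0 u1.
  apply: (@closed_cvg _ _ (x3^'-) _ (fun v => divdiff3 f u x1 x2 v) P Pcl).
    rewrite near_withinE; near=> v => vx3; apply: inner => //.
    by near: v; exact: lt_nbhsr.
  apply: (@cvg_dd R E f _ _ (fun=> u) id) => //.
  - exact: cvg_cst.
  - exact: cvg_at_left_filter.
  - exact: cvg_cst.
apply: (@closed_cvg _ _ (x0^'+) _ (fun u => divdiff3 f u x1 x2 x3) P Pcl).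
  rewrite near_withinE; near=> u => x0u; apply: step1 => //.
  by near: u; exact: lt_nbhsl.
apply: (@cvg_dd R E f _ _ id (fun=> x3)) => //.
- exact: cvg_at_right_filter.
- exact: cvg_cst.
- exact: cvg_cst.
Unshelve. all: by end_near.
Qed.
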